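(* Let $V\in(\mathbb{R}\cup\{-\infty\})^{n\times p}$ have no row and no column identically equal to $-\infty$. If a Hilbert ball $B(a,r)$ with $a\in\mathbb{R}^n$ and radius $r>0$ is included in $\operatorname{Col}(V)$, then it is also included in a simplicial tropical cone generated by some $n$ columns of $V$.
   Context: $\mathbb{R}_{\max}=\mathbb{R}\cup\{-\infty\}$. A tropical cone is a subset $\mathcal{C}\subset\mathbb{R}_{\max}^n$ such that $x,y\in\mathcal C$, $\lambda\in\mathbb{R}_{\max}$ imply $\lambda+x\in\mathcal C$ and $x\vee y=(\max(x_i,y_i))_i\in\mathcal C$. $\operatorname{Col}(V)$ is the tropical cone generated by the columns of $V$, i.e. $\{Vx:x\in\mathbb{R}_{\max}^p\}$ with $(Vx)_i=\max_k(V_{ik}+x_k)$. Hilbert's projective metric: $d(x,y)=\inf\{\lambda-\mu:\lambda,\mu\in\mathbb{R},\ \mu+y_i\le x_i\le\lambda+y_i\ \forall i\}$; $B(a,r)=\{x\in\mathbb{R}_{\max}^n:d(a,x)\le r\}$. A vector $u$ of a tropical cone $\mathcal C$ is extreme if $u=v\vee w$ with $v,w\in\mathcal C$ implies $u=v$ or $u=w$; an extreme direction is a set $\{\lambda+u:\lambda\in\mathbb{R}_{\max}\}$ with $u$ extreme. A tropical cone in $\mathbb{R}_{\max}^n$ is simplicial if it has precisely $n$ extreme directions. *)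

(* Defs.v *)
From HB Require Import structures.
From mathcomp Require Import all_boot all_order all_algebra.
From mathcomp Require Import boolp classical_sets reals constructive_ereal ereal.
Set Implicit Arguments. Unset Strict Implicit. Unset Printing Implicit Defensive.
Import Order.TTheory GRing.Theory Num.Theory.
Local Open Scope ring_scope.
Local Open Scope classical_set_scope.

Section Tropical.
Variable R : realType.

(* R_max = R U {-oo}, with None playing the role of -oo *)
Definition Rmax := option R.

Definition tadd (x y : Rmax) : Rmax :=
  match x, y with Some a, Some b => Some (a + b) | _, _ => None end.
Definition tmax (x y : Rmax) : Rmax :=
  match x, y with
  | Some a, Some b => Some (Num.max a b)
  | None, y => y
  | x, None => x
  end.
Definition tle (x y : Rmax) : bool :=
  match x, y with
  | None, _ => true
  | Some _, None => false
  | Some a, Some b => a <= b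
  end.

Definition tvec (n : nat) := 'I_n -> Rmax.

Definition tscale n (l : Rmax) (x : tvec n) : tvec n := fun i => tadd l (x i).
Definition tjoin n (x y : tvec n) : tvec n := fun i => tmax (x i) (y i).

Definition tropical_cone n (C : set (tvec n)) : Prop :=
  (forall x l, C x -> C (tscale l x)) /\ (forall x y, C x -> C y -> C (tjoin x y)).

Definition tmatvec n p (V : 'I_n -> 'I_p -> Rmax) (x : tvec p) : tvec n :=
  fun i => \big[tmax/None]_(k < p) tadd (V i k) (x k).

Definition Col n p (V : 'I_n -> 'I_p -> Rmax) : set (tvec n) :=
  [set y | exists x : tvec p, y = tmatvec V x].

(* Hilbert's projective metric, valued in extended reals (inf of empty set = +oo):
   d(x,y) = inf { l - m : l, m in R, m + y_i <= x_i <= l + y_i for all i } *)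
Definition hilbert n (x y : tvec n) : \bar R :=
  ereal_inf [set t : \bar R | exists l m : R, t = (l - m)%:E /\
     forall i, tle (tadd (Some m) (y i)) (x i) && tle (x i) (tadd (Some l) (y i))].

Definition hball n (a : tvec n) (r : R) : set (tvec n) :=
  [set x | (hilbert a x <= r%:E)%E].

Definition tzero n : tvec n := fun _ => None.

Definition extreme n (C : set (tvec n)) (u : tvec n) : Prop :=
  C u /\ u <> @tzero n /\
  (forall v w, C v -> C w -> u = tjoin v w -> u = v \/ u = w).

Definition direction n (u : tvec n) : set (tvec n) :=
  [set tscale l u | l in [set: Rmax]].

Definition simplicial n (C : set (tvec n)) : Prop :=
  tropical_cone C /\
  exists u : 'I_n -> tvec n,
    (forall i, extreme C (u i)) /\
    injective (fun i => direction (u i)) /\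
    (forall v, extreme C v -> exists i, direction v = direction (u i)).

End Tropical.

(* Main.v *)
Require Import Defs.
From HB Require Import structures.
From mathcomp Require Import all_boot all_order all_algebra.
From mathcomp Require Import boolp classical_sets reals constructive_ereal ereal.
From mathcomp Require Import lra.
Import Order.TTheory GRing.Theory Num.Theory.
Local Open Scope ring_scope.
Local Open Scope classical_set_scope.
Set Implicit Arguments. Unset Strict Implicit.

Section Basics.
Variable R : realType.
Implicit Types x y z : Rmax R.

Lemma tmaxA : associative (@tmax R).
Proof. by case=> [a|] [b|] [c|] //=; rewrite maxA. Qed.
Lemma tmaxC : commutative (@tmax R).
Proof. by case=> [a|] [b|] //=; rewrite maxC. Qed.
Lemma tmax0l : left_id None (@tmax R).
Proof. by case. Qed.

HB.instance Definition _ := Monoid.isComLaw.Build (Rmax R) None (@tmax R) tmaxA tmaxC tmax0l.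

Lemma tmaxx0 x : tmax x None = x. Proof. by case: x. Qed.
Lemma tle_refl x : tle x x. Proof. by case: x => //= a. Qed.
Lemma tle_trans x y z : tle x y -> tle y z -> tle x z.
Proof. by case: x => [a|] // ; case: y => [b|] //; case: z => [c|] //=; apply: le_trans. Qed.
Lemma tle_anti x y : tle x y -> tle y x -> x = y.
Proof. case: x => [a|]; case: y => [b|] //= h1 h2. by rewrite (@le_anti _ _ a b) ?h1 ?h2. Qed.
Lemma tle_maxl x y : tle x (tmax x y). Proof. case: x => [a|]; case: y => [b|] //=; by rewrite ?le_max ?lexx. Qed.
Lemma tle_maxr x y : tle y (tmax x y). Proof. by rewrite tmaxC tle_maxl. Qed.
Lemma tmax_le x y z : tle x z -> tle y z -> tle (tmax x y) z.
Proof. case: x => [a|]; case: y => [b|]; case: z => [c|] //=; by rewrite ?ge_max => -> ->. Qed.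
Lemma tmax_eq x y : tle y x -> tmax x y = x.
Proof. move=> h; apply: tle_anti; [exact: tmax_le (tle_refl _) h | exact: tle_maxl]. Qed.
Lemma tmax_cases x y : tmax x y = x \/ tmax x y = y.
Proof. case: x => [a|]; case: y => [b|] /=; auto. rewrite /Num.max; case: ifP; auto. Qed.
Lemma taddA x y z : tadd x (tadd y z) = tadd (tadd x y) z.
Proof. by case: x => [a|]; case: y => [b|]; case: z => [c|] //=; rewrite addrA. Qed.
Lemma taddC x y : tadd x y = tadd y x.
Proof. by case: x => [a|]; case: y => [b|] //=; rewrite addrC. Qed.
Lemma tadd_max x y z : tadd x (tmax y z) = tmax (tadd x y) (tadd x z).
Proof.
case: x => [a|]; case: y => [b|]; case: z => [c|] //=.
by congr Some; rewrite /Num.max ltrD2l; case: ifP.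
Qed.
Lemma tadd_le x y z : tle y z -> tle (tadd x y) (tadd x z).
Proof. case: x => [a|]; case: y => [b|]; case: z => [c|] //=; by rewrite lerD2l. Qed.

Lemma tadd_None x : tadd x None = None. Proof. by case: x. Qed.

Variables (n p : nat).

Lemma tmv_ge (V : 'I_n -> 'I_p -> Rmax R) (x : tvec R p) i k : tle (tadd (V i k) (x k)) (tmatvec V x i).
Proof. rewrite /tmatvec (bigD1 k) //=; exact: tle_maxl. Qed.

Lemma tmv_le (V : 'I_n -> 'I_p -> Rmax R) (x : tvec R p) i y :
  (forall k, tle (tadd (V i k) (x k)) y) -> tle (tmatvec V x i) y.
Proof.
move=> h; rewrite /tmatvec; apply: (big_ind (fun z => tle z y)) => //.
by move=> u v; apply: tmax_le.
Qed.

Lemma tmv_att (V : 'I_n -> 'I_p -> Rmax R) (x : tvec R p) i :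
  tmatvec V x i = None \/ exists k, tmatvec V x i = tadd (V i k) (x k).
Proof.
rewrite /tmatvec.
apply: (big_ind (fun z => z = None \/ exists k, z = tadd (V i k) (x k))); eauto.
move=> u v [->|[k1 ->]] [->|[k2 ->]]; rewrite ?tmax0l ?tmaxx0; eauto.
by case: (tmax_cases (tadd (V i k1) (x k1)) (tadd (V i k2) (x k2))) => ->; eauto.
Qed.

Lemma Col_cone (V : 'I_n -> 'I_p -> Rmax R) : tropical_cone (Col V).
Proof.
split.
- move=> _ l [x ->]; exists (tscale l x); apply: funext => i.
  rewrite /tscale /tmatvec (big_morph (tadd l) (tadd_max l) (tadd_None l)).
  by apply: eq_bigr => k _; rewrite taddA (taddC l) taddA.
- move=> _ _ [x ->] [y ->]; exists (tjoin x y); apply: funext => i.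
  rewrite /tjoin /tmatvec -big_split /=.
  by apply: eq_bigr => k _; rewrite tadd_max.
Qed.

End Basics.

Section Ball.
Variable R : realType.
Variable n : nat.

Lemma hball_fin (a : 'I_n -> R) r (x : tvec R n) :
  hball (fun i => Some (a i)) r x ->
  exists xr : 'I_n -> R, x = (fun i => Some (xr i)) /\
     forall i j, (xr i - a i) - (xr j - a j) <= r.
Proof.
rewrite /hball /hilbert /= => hx.
have hlt : forall e, 0 < e -> exists l m : R, l - m < r + e /\ forall i,
   tle (tadd (Some m) (x i)) (Some (a i)) && tle (Some (a i)) (tadd (Some l) (x i)).
  move=> e e0.
  have : (ereal_inf [set t : \bar R | exists l m : R, t = (l - m)%:E /\
     forall i, tle (tadd (Some m) (x i)) (Some (a i)) && tle (Some (a i)) (tadd (Some l) (x i))]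
     < (r + e)%:E)%E.
    by apply: (le_lt_trans hx); rewrite lte_fin ltrDl.
  case/ereal_inf_lt => _ [l [m [-> h]]]; rewrite lte_fin => hlm.
  by exists l, m.
have [l [m [_ h1]]] := hlt 1 ltr01.
exists (fun i => odflt 0 (x i)); split.
  apply: funext => i; move: (h1 i); case: (x i) => //=.

move=> i j; apply/ler_addgt0Pr => e e0.
have [l' [m' [hlm h]]] := hlt e e0.
move: (h i) (h j); move: (h1 i) (h1 j).
case: (x i) => [xi|] //=; case: (x j) => [xj|] //=; rewrite ?andbF //.
move=> _ _ /andP [hi1 hi2] /andP [hj1 hj2]; lra.
Qed.

Lemma hball_mem (a : 'I_n -> R) r (xr : 'I_n -> R) l m :
  l - m <= r -> (forall i, m + xr i <= a i /\ a i <= l + xr i) ->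
  hball (fun i => Some (a i)) r (fun i => Some (xr i)).
Proof.
move=> hlm h; rewrite /hball /hilbert /=.
apply: (@le_trans _ _ (l - m)%:E); last by rewrite lee_fin.
apply: ereal_inf_lbound.
exists l, m; split => // i /=; case: (h i) => -> ->; done.
Qed.

End Ball.

Section WSec.
Variable R : realType.
Variable n : nat.
Variable W : 'I_n -> 'I_n -> Rmax R.
Variables (a : 'I_n -> R) (r : R).
Hypothesis hr : 0 < r.
Hypothesis P1 : forall k, W k k = Some (a k + r).
Hypothesis P2 : forall i k, i != k -> tle (W i k) (Some (a i)).

Lemma ball_sub : hball (fun i => Some (a i)) r `<=` Col W.
Proof.
move=> x /hball_fin [xr [-> hx]].
exists (fun k => Some (xr k - a k - r)); apply: funext => i; symmetry.
rewrite /tmatvec (bigD1 i) // P1 [tadd _ _]/=.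
have -> : a i + r + (xr i - a i - r) = xr i by lra.
apply: tmax_eq.
apply: (big_ind (fun z => tle z (Some (xr i)))) => //.
  by move=> u v; apply: tmax_le.
move=> k; rewrite andTb eq_sym => hk; move: (P2 hk) (hx k i); case: (W i k) => [w|] //= h1 h2; lra.
Qed.

Definition col k : tvec R n := fun i => W i k.

Lemma col_in k : Col W (col k).
Proof.
exists (fun j => if j == k then Some 0 else None); apply: funext => i.
rewrite /tmatvec (bigD1 k) //= eqxx big1 ?tmaxx0.
  by rewrite /col; case: (W i k) => //= w; rewrite addr0.
by move=> j /negbTE ->; rewrite tadd_None.
Qed.

Lemma col_key k v : Col W v -> (forall i, tle (v i) (W i k)) -> v k = W k k -> v = col k.
Proof.
move=> [mu ->] hle heq.
case: (@tmv_att _ _ _ W mu k) => [hN|[j hj]]; first by rewrite hN P1 in heq.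
have [ejk|njk] := eqVneq j k.
  subst j; move: heq; rewrite hj P1.
  case E: (mu k) => [m|] //= [hm].
  have m0 : m = 0 by lra.
  apply: funext => i.
  apply: tle_anti; first exact: hle.
  apply: tle_trans (@tmv_ge _ _ _ W mu i k).
  rewrite /col; case: (W i k) => [w'|] //=.
  by rewrite E m0 /= addr0.
exfalso.
move: heq; rewrite hj P1.
have hkj : k != j by rewrite eq_sym.
have h1 := P2 hkj.
have h2 := P2 njk.
have h3 := hle j.
have h4 := @tmv_ge _ _ _ W mu j j.
rewrite P1 in h4.
have h5 := @tle_trans _ _ _ _ (@tle_trans _ _ _ _ h4 h3) h2.
move: h1 h5; case: (W k j) => [w|] //=; case: (mu j) => [m|] //= h1 h5 [h6].
clear -hr h1 h5 h6.
have hm : r <= m by rewrite -(lerD2l w) h6 lerD2r.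
have : r + m <= 0 by rewrite -(lerD2l (a j)) addr0 addrA.
move=> h.
have hr' : 0 < r by exact: hr.
lra.
Qed.


Lemma col_extreme k : extreme (Col W) (col k).
Proof.
split; first exact: col_in.
split.
  move/(congr1 (fun f => f k)); rewrite /col P1 /tzero; done.
move=> v w hv hw hj.
have hk := congr1 (fun f => f k) hj; rewrite /= /col /tjoin in hk.
case: (tmax_cases (v k) (w k)) => he.
  left; symmetry; apply: col_key => //; last by rewrite hk he.
  by move=> i; have := congr1 (fun f => f i) hj; rewrite /col /tjoin /= => ->; apply: tle_maxl.
right; symmetry; apply: col_key => //; last by rewrite hk he.
by move=> i; have := congr1 (fun f => f i) hj; rewrite /col /tjoin /= => ->; apply: tle_maxr.
Qed.

Lemma col_self k : direction (col k) (col k).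
Proof.
exists (Some 0) => //; apply: funext => i; rewrite /tscale /col.
by case: (W i k) => //= w; rewrite add0r.
Qed.

Lemma dir_inj : injective (fun i => direction (col i)).
Proof.
move=> k k' /= he.
have : direction (col k') (col k) by rewrite -he; exact: col_self.
case=> l _ hl.
have [//|nk] := eqVneq k k'.
exfalso.
have h1 := congr1 (fun f => f k) hl; have h2 := congr1 (fun f => f k') hl.
rewrite /= /tscale /col P1 in h1; rewrite /= /tscale /col P1 in h2.
have h3 := P2 nk.
have h4 : k' != k by rewrite eq_sym.
have h5 := P2 h4.
clear hl he; move: h1 h2 h3 h5; case: l => [c|] //=; case: (W k k') => [w1|] //=; case: (W k' k) => [w2|] //=.
move=> [e1] [e2] h3 h5.
have hr' : 0 < r by exact: hr.
case: e2 => e2; lra.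
Qed.

Definition J (mu : tvec R n) (A : {set 'I_n}) : tvec R n :=
  tmatvec W (fun j => if j \in A then mu j else None).

Lemma J_in mu (A : {set 'I_n}) : Col W (J mu A).
Proof. by exists (fun j => if j \in A then mu j else None). Qed.

Lemma J_split mu (A : {set 'I_n}) x : x \in A -> J mu A = tjoin (J mu [set x]) (J mu (A :\ x)).
Proof.
move=> hx; apply: funext => i; rewrite /tjoin /J /tmatvec -big_split /=.
apply: eq_bigr => j _.
rewrite !inE.
have [->|njx] := eqVneq j x.
  by rewrite hx /= tadd_None tmaxx0.
by rewrite /= tadd_None tmax0l.
Qed.

Lemma tscale_comp (l l' : Rmax R) (u : tvec R n) : tscale l (tscale l' u) = tscale (tadd l l') u.
Proof. by apply: funext => i; rewrite /tscale taddA. Qed.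

Lemma J_one mu (x : 'I_n) : J mu [set x] = tscale (mu x) (col x).
Proof.
apply: funext => i; rewrite /J /tmatvec (bigD1 x) // !inE eqxx big1.
  rewrite /tscale /col (taddC (mu x)); exact: tmaxx0.
by move=> j; rewrite ?andTb => hj; rewrite !inE (negbTE hj) tadd_None.
Qed.

Lemma J_set0 mu : J mu (finset.set0) = @tzero R n.
Proof. by apply: funext => i; rewrite /J /tmatvec big1 // => j _; rewrite inE tadd_None. Qed.

Lemma J_setT mu : J mu [set: 'I_n] = tmatvec W mu.
Proof. by apply: funext => i; rewrite /J /tmatvec; apply: eq_bigr => j _; rewrite inE. Qed.

Lemma extreme_J v mu : extreme (Col W) v ->
  forall N (A : {set 'I_n}), (#|A| <= N)%N -> v = J mu A -> exists j, v = tscale (mu j) (col j).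
Proof.
move=> [_ [hnz hext]]; elim=> [|N IH] A hA hv.
  move: hA; rewrite leqn0 cards_eq0 => /eqP hA0.
  by rewrite hv hA0 J_set0 in hnz.
case: (set_0Vmem A) => [hA0|[x hx]].
  by rewrite hv hA0 J_set0 in hnz.
case: (hext _ _ (J_in mu [set x]) (J_in mu (A :\ x))); first by rewrite hv -J_split.
  by move=> ->; exists x; rewrite J_one.
move=> hv'; apply: (IH (A :\ x)) => //.
by move: hA; rewrite (cardsD1 x A) hx.
Qed.

Lemma extreme_dir v : extreme (Col W) v -> exists i, direction v = direction (col i).
Proof.
move=> hv; have [[mu hmu] [hnz _]] := hv.
have := @extreme_J v mu hv _ [set: 'I_n] (leqnn _); rewrite J_setT => /(_ hmu) [j hj].
exists j; rewrite hj.
case E: (mu j) => [c|]; last first.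
  by exfalso; apply: hnz; rewrite hj E; apply: funext.
apply/seteqP; split => y [l _ <-].
  by exists (tadd l (Some c)) => //; rewrite tscale_comp.
exists (tadd l (Some (- c))) => //; rewrite tscale_comp -taddA /=.
by rewrite addNr; case: l => //= b; rewrite addr0.
Qed.

Lemma simplicial_W : simplicial (Col W).
Proof.
split; first exact: Col_cone.
exists col; split; first exact: col_extreme.
split; first exact: dir_inj.
exact: extreme_dir.
Qed.

End WSec.
Unset Implicit Arguments.

Theorem proposition3p8 (R : realType) (n p : nat)
    (V : 'I_n -> 'I_p -> Rmax R)
    (hrow : forall i : 'I_n, exists k : 'I_p, V i k <> None)
    (hcol : forall k : 'I_p, exists i : 'I_n, V i k <> None)
    (a : 'I_n -> R) (r : R) (hr : 0 < r) :
  hball (fun i => Some (a i)) r `<=` Col V ->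
  exists f : 'I_n -> 'I_p, injective f /\
    simplicial (Col (fun i j => V i (f j))) /\
    hball (fun i => Some (a i)) r `<=` Col (fun i j => V i (f j)).
Proof.
move=> hsub.
have hr' : 0 < r by exact: hr.
pose g k : 'I_n -> R := fun i => a i + (if i == k then r else 0).
have hg : forall k, exists jl : 'I_p * R,
    tadd (V k jl.1) (Some jl.2) = Some (a k + r) /\
    forall i, tle (tadd (V i jl.1) (Some jl.2)) (Some (g k i)).
  move=> k.
  have hb : hball (fun i => Some (a i)) r (fun i => Some (g k i)).
    apply: (@hball_mem _ _ a r (g k) 0 (- r)); first by lra.
    move=> i; rewrite /g; case: (i == k); split; lra.
  have [x hx] := hsub _ hb.
  have hxk := congr1 (fun f => f k) hx; rewrite /= /g eqxx in hxk.
  case: (tmv_att V x k) => [hN|[j hj]]; first by rewrite -hxk in hN.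
  move: hj; rewrite -hxk; case E: (x j) => [l|]; last by rewrite tadd_None.
  move=> hj; exists (j, l); split => //= i.
  have := tmv_ge V x i j; rewrite E -(congr1 (fun f => f i) hx) //.
have [F hF] := choice hg.
pose f k := (F k).1; pose lam k := (F k).2.
pose W i k := tadd (V i (f k)) (Some (lam k)).
have P1 : forall k, W k k = Some (a k + r) by move=> k; case: (hF k).
have P2 : forall i k, i != k -> tle (W i k) (Some (a i)).
  move=> i k hik; case: (hF k) => _ /(_ i); rewrite /g (negbTE hik) addr0 //.
have finj : injective f.
  move=> k k' hkk'; apply/eqP; apply/negP => /negP nk.
  have nk' : k' != k by rewrite eq_sym.
  have e1 := P1 k; have e2 := P1 k'; have e3 := P2 _ _ nk; have e4 := P2 _ _ nk'.
  move: e1 e2 e3 e4; rewrite /W hkk'.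
  case: (V k (f k')) => [u|] //=; case: (V k' (f k')) => [u'|] //= [e1] [e2] e3 e4.
  lra.
have hcolEq : Col (fun i j => V i (f j)) = Col W.
  apply/seteqP; split => y [mu ->].
    exists (fun k => tadd (Some (- lam k)) (mu k)); apply: funext => i.
    rewrite /tmatvec; apply: eq_bigr => k _; rewrite /W.
    case: (V i (f k)) => [b|] //=; case: (mu k) => [m|] //=.
    by congr Some; rewrite addrA addrK.
  exists (fun k => tadd (Some (lam k)) (mu k)); apply: funext => i.
  by rewrite /tmatvec; apply: eq_bigr => k _; rewrite /W taddA.
exists f; split => //; rewrite hcolEq; split.
  exact: (simplicial_W hr P1 P2).
exact: (ball_sub P1 P2).
Qed.
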